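(* Assume the setting, construction and assumptions (A1)–(A6) described in the context. Then there are positive constants $M,C,c_3,c_4$ such that $$P\Big(\max_{i\le n}|h(Z_i)-h_0(Z_i)|\ge Ms\sqrt{\tfrac{\log(d\vee n)}{n}}\ \Big|\ Y,X,Z\Big)\le C(d\vee n)^{-c_3}$$ on an event $\mathcal{E}_3$ with $P(\mathcal{E}_3)\ge1-(d\vee n)^{-c_3}$, and $$P\Big(\max_{i\le n}|\phi_i-\phi_{0i}|\ge Ms\sqrt{\tfrac{\log(d\vee n)}{n}}\ \Big|\ Y,X,Z\Big)\le C(d\vee n)^{-c_4}$$ on an event $\mathcal{E}_4$ with $P(\mathcal{E}_4)\ge1-(d\vee n)^{-c_4}$.
   Context: Data: for $i=1,\dots,n$, observations $(Y_i,X_i,Z_i)$ with $Y_i\in\{0,1\}$, $X_i\in\{0,1\}$, $Z_i\in\mathbb{R}^d$. The responses are independently generated from $P(Y_i=1\mid X_i,Z_i)=\frac{\exp(X_i\theta_0+Z_i^T\beta_0)}{1+\exp(X_i\theta_0+Z_i^T\beta_0)}$ with true $\theta_0\in\mathbb{R}$, $\beta_0\in\mathbb{R}^d$; $s$ is the number of nonzero entries of $\beta_0$. $P(X_i=1\mid Z_i)$ is the true propensity score. Write $a\vee b=\max\{a,b\}$. Oracle quantities: with $p_{ik}=\frac{\exp(k\theta_0+Z_i^T\beta_0)}{1+\exp(k\theta_0+Z_i^T\beta_0)}$ for $k\in\{0,1\}$, $R_{0i}=\frac{p_{i0}(1-p_{i0})P(X_i=0\mid Z_i)}{p_{i1}(1-p_{i1})P(X_i=1\mid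 Z_i)}$, $h_0(Z_i)=1/(1+R_{0i})$, $\phi_{0i}=\theta_0h_0(Z_i)+Z_i^T\beta_0$. Construction: priors $\pi(\tilde\theta),\pi(\beta),\pi(\gamma)$. Draw $(\tilde\theta,\beta)$ from $f((\tilde\theta,\beta)\mid Y,X,Z)\propto \pi(\tilde\theta)\pi(\beta)\prod_{i=1}^n\frac{\exp(X_i\tilde\theta+Z_i^T\beta)^{Y_i}}{1+\exp(X_i\tilde\theta+Z_i^T\beta)}$ and $\gamma\in\mathbb{R}^d$ from $f(\gamma\mid X,Z)\propto\pi(\gamma)\prod_{i=1}^n\frac{\exp(Z_i^T\gamma)^{X_i}}{1+\exp(Z_i^T\gamma)}$. Set $P(X_i=1\mid Z_i,\gamma)=\frac{\exp(Z_i^T\gamma)}{1+\exp(Z_i^T\gamma)}$, $q_{ik}=\frac{\exp(k\tilde\theta+Z_i^T\beta)}{1+\exp(k\tilde\theta+Z_i^T\beta)}$, $R_i=\frac{q_{i0}(1-q_{i0})P(X_i=0\mid Z_i,\gamma)}{q_{i1}(1-q_{i1})P(X_i=1\mid Z_i,\gamma)}$, $h(Z_i)=1/(1+R_i)$, $\phi_i=\tilde\theta h(Z_i)+Z_i^T\beta$. The probabilities conditional on $Y,X,Z$ in the claim are with respect to these posterior draws. Assumptions: (A1) $\log d=o(n)$. (A2) $\max_{i,j}|Z_{ij}|\le C$ for some $0<C<\infty$. (A3) $s^2\log(d\vee n)=o(\sqrt n)$. (A4) There are constants $M,C,c_1>0$ and an event $\mathcal{E}_1$ with $P(\mathcal{E}_1)\ge1-(d\vee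 n)^{-c_1}$ on which $P\big(\max\{\|(\tilde\theta,\beta)-(\theta_0,\beta_0)\|_1/s,\ \|(\tilde\theta,\beta)-(\theta_0,\beta_0)\|_2/s^{1/2}\}\ge M\sqrt{\log(d\vee n)/n}\mid Y,X,Z\big)\le C(d\vee n)^{-c_1}$. (A5) There are constants $M,C,c_2>0$ and an event $\mathcal{E}_2$ with $P(\mathcal{E}_2)\ge1-(d\vee n)^{-c_2}$ on which $P\Big(\max_{i\le n}\Big|\log\frac{P(X_i=1\mid Z_i,\gamma)/P(X_i=0\mid Z_i,\gamma)}{P(X_i=1\mid Z_i)/P(X_i=0\mid Z_i)}\Big|\ge M\sqrt{\log(d\vee n)/n}\mid X,Z\Big)\le C(d\vee n)^{-c_2}$. (A6) a prior $\pi(\theta)$ is continuous at $\theta_0$ with $\pi(\theta_0)>0$, and $|\theta_0|\le M_0$ for some $M_0>0$. *)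

(* Defs.v *)
From HB Require Import structures.
From mathcomp Require Import all_boot all_order all_algebra.
From mathcomp Require Import all_classical all_reals all_analysis.
Set Implicit Arguments. Unset Strict Implicit. Unset Printing Implicit Defensive.
Import Order.TTheory GRing.Theory Num.Theory.
Import numFieldNormedType.Exports.
Local Open Scope classical_set_scope.
Local Open Scope ring_scope.

Section Defs.
Variable R : realType.

Definition lin (d : nat) (z b : 'I_d -> R) : R := \sum_(j < d) z j * b j.

Definition logistic (u : R) : R := expR u / (1 + expR u).

Definition b2R (b : bool) : R := (b : nat)%:R.

Definition odds (p : R) : R := p / (1 - p).

(* h(z) = 1/(1+R) with q_k = logistic(k th + z^T b), e = P(X=1|Z=z):
   R = q0(1-q0)(1-e) / (q1(1-q1) e). *)
Definition hfun (d : nat) (th : R) (b : 'I_d -> R) (e : R) (z : 'I_d -> R) : R :=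
  let q0 := logistic (lin z b) in
  let q1 := logistic (th + lin z b) in
  1 / (1 + (q0 * (1 - q0) * (1 - e)) / (q1 * (1 - q1) * e)).

Definition phifun (d : nat) (th : R) (b : 'I_d -> R) (e : R) (z : 'I_d -> R) : R :=
  th * hfun th b e z + lin z b.

(* full-data likelihood of (th, b) for the outcome model times likelihood of
   g for the propensity model:
   prod_i exp(x_i th + z_i^T b)^{y_i}/(1+exp(..)) * prod_i exp(z_i^T g)^{x_i}/(1+exp(..)) *)
Definition lik (n d : nat) (y x : 'I_n -> bool) (z : 'I_n -> 'I_d -> R)
    (th : R) (b g : 'I_d -> R) : R :=
  (\prod_(i < n) (expR (b2R (x i) * th + lin (z i) b) ^+ (y i)
                    / (1 + expR (b2R (x i) * th + lin (z i) b))))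
  * (\prod_(i < n) (expR (lin (z i) g) ^+ (x i) / (1 + expR (lin (z i) g)))).

(* Posterior probability of A under the prior Pr reweighted by the likelihood L
   (posterior density proportional to prior times likelihood). *)
Definition post (dt : measure_display) (T : measurableType dt)
    (Pr : probability T R) (L : T -> R) (A : set T) : \bar R :=
  ((\int[Pr]_(t in A) (L t)%:E) * ((fine (\int[Pr]_(t in setT) (L t)%:E))^-1)%:E)%E.

Definition sigma_of (dt : measure_display) (T : measurableType dt) (I : Type)
    (f : I -> T -> R) : set (set T) :=
  <<s [set A | exists i (B : set R), measurable B /\ A = f i @^-1` B] >>.

Definition sigma_XZ (dO : measure_display) (O : measurableType dO) (n d : nat)
    (X : O -> 'I_n -> bool) (Z : O -> 'I_n -> 'I_d -> R) : set (set O) :=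
  <<s [set A | (exists i, A = [set w | X w i]) \/
               (exists i j (B : set R), measurable B /\
                   A = (fun w => Z w i j) @^-1` B)] >>.

Definition sigma_Zi (dO : measure_display) (O : measurableType dO) (n d : nat)
    (Z : O -> 'I_n -> 'I_d -> R) (i : 'I_n) : set (set O) :=
  <<s [set A | exists j (B : set R), measurable B /\
                   A = (fun w => Z w i j) @^-1` B] >>.

Definition dvn (d n : nat) : R := (maxn d n)%:R.
Definition rate (d n : nat) : R := Num.sqrt (ln (dvn d n) / n%:R).

Definition sparsity (d : nat) (b : 'I_d -> R) : nat := #|[pred j | b j != 0]|.

Definition dev1 (d : nat) (th th0 : R) (b b0 : 'I_d -> R) : R :=
  `|th - th0| + \sum_(j < d) `|b j - b0 j|.
Definition dev2 (d : nat) (th th0 : R) (b b0 : 'I_d -> R) : R :=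
  Num.sqrt ((th - th0) ^+ 2 + \sum_(j < d) (b j - b0 j) ^+ 2).

Definition Post (n d : nat) (dt : measure_display) (T : measurableType dt)
    (Pr : probability T R) (th : T -> R) (b g : T -> 'I_d -> R)
    (y x : 'I_n -> bool) (z : 'I_n -> 'I_d -> R) (A : set T) : \bar R :=
  post Pr (fun t => lik y x z (th t) (b t) (g t)) A.

End Defs.

(* Main.v *)
Require Import Defs.
From HB Require Import structures.
From mathcomp Require Import all_boot all_order all_algebra.
From mathcomp Require Import all_classical all_reals all_analysis.
Import Order.TTheory GRing.Theory Num.Theory.
Import numFieldNormedType.Exports.
Local Open Scope classical_set_scope.
Local Open Scope ring_scope.
From mathcomp Require Import ring lra.

Section Meas.
Context (dt : measure_display) (T : measurableType dt) (R : realType).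

Lemma meas_ge (f : T -> R) (c : R) : measurable_fun setT f ->
  measurable [set t | c <= f t].
Proof.
move=> mf.
have := mf measurableT `[c, +oo[%classic (measurable_itv _).
rewrite setTI; congr measurable; apply/seteqP; split => t /=;
  by rewrite in_itv /= andbT.
Qed.

Lemma meas_inv_pos (f : T -> R) : measurable_fun setT f -> (forall t, 0 < f t) ->
  measurable_fun setT (fun t => (f t)^-1).
Proof.
move=> mf f0.
have -> : (fun t => (f t)^-1) = (fun t => expR (- ln (f t))).
  by apply/funext => t; rewrite expRN lnK // posrE.
apply: measurableT_comp; first exact: measurable_realfun.measurable_expR.
apply: measurable_realfun.measurable_funN; apply: measurableT_comp => //; exact: measurable_realfun.measurable_ln.
Qed.

Lemma meas_lin d (z : 'I_d -> R) (f : T -> 'I_d -> R) :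
  (forall j, measurable_fun setT (fun t => f t j)) ->
  measurable_fun setT (fun t => lin z (f t)).
Proof.
move=> mf; rewrite /lin.
apply: (@measurable_sum _ _ _ setT _ _ (fun j t => z j * f t j)) => j.
by apply: measurable_realfun.measurable_funM => //; exact: measurable_cst.
Qed.

Lemma meas_factor (v : T -> R) (k : nat) : measurable_fun setT v ->
  measurable_fun setT (fun t => expR (v t) ^+ k / (1 + expR (v t))).
Proof.
move=> mv.
have me : measurable_fun setT (fun t => expR (v t)).
  by apply: measurableT_comp => //; exact: measurable_realfun.measurable_expR.
apply: measurable_realfun.measurable_funM; first exact: measurable_realfun.measurable_funX.
apply: meas_inv_pos.
  by apply: measurable_realfun.measurable_funD => //; exact: measurable_cst.
by move=> t; rewrite addr_gt0 // expR_gt0.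
Qed.

Lemma meas_lik n d (y x : 'I_n -> bool) (z : 'I_n -> 'I_d -> R)
  (th : T -> R) (b g : T -> 'I_d -> R) :
  measurable_fun setT th ->
  (forall j, measurable_fun setT (fun t => b t j)) ->
  (forall j, measurable_fun setT (fun t => g t j)) ->
  measurable_fun setT (fun t => lik y x z (th t) (b t) (g t)).
Proof.
move=> mth mb mg; rewrite /lik.
apply: measurable_realfun.measurable_funM.
  apply: (@measurable_prod _ _ _ setT _ _ (fun i t => expR (b2R R (x i) * th t + lin (z i) (b t)) ^+ y i
      / (1 + expR (b2R R (x i) * th t + lin (z i) (b t))))) => i _.
  apply: meas_factor; apply: measurable_realfun.measurable_funD; last exact: meas_lin.
  by apply: measurable_realfun.measurable_funM => //; exact: measurable_cst.
apply: (@measurable_prod _ _ _ setT _ _ (fun i t => expR (lin (z i) (g t)) ^+ x i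
      / (1 + expR (lin (z i) (g t))))) => i _.
by apply: meas_factor; exact: meas_lin.
Qed.

Lemma lik_ge0 n d (y x : 'I_n -> bool) (z : 'I_n -> 'I_d -> R) th (b g : 'I_d -> R) :
  0 <= lik y x z th b g.
Proof.
rewrite /lik; apply: mulr_ge0; apply: prodr_ge0 => i _;
  by apply: divr_ge0; [apply: exprn_ge0; apply: ltW; apply: expR_gt0|
    apply: ltW; rewrite addr_gt0 // expR_gt0].
Qed.

End Meas.

Section IntLemmas.
Context d (T : measurableType d) (R : realType).
Variable mu : {measure set T -> \bar R}.
Local Open Scope ereal_scope.

Lemma nn_le_int (D : set T) (f g : T -> \bar R) :
  (forall x, D x -> 0 <= f x) -> (forall x, D x -> f x <= g x) ->
  \int[mu]_(x in D) f x <= \int[mu]_(x in D) g x.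
Proof.
move=> f0 fg.
have g0 : forall x, D x -> 0 <= g x by move=> x Dx; exact: le_trans (f0 _ Dx) (fg _ Dx).
rewrite (ge0_integralE _ f0) (ge0_integralE _ g0).
apply: ereal_sup_le => _ [h hf <-]; exists h => //= x.
apply: le_trans (hf x) _; rewrite /patch; case: ifP => // /set_mem Dx.
exact: fg.
Qed.

Lemma int_monoD (A B : set T) (f : T -> R) : (forall x, (0 <= f x)%R) -> A `<=` B ->
  \int[mu]_(x in A) (f x)%:E <= \int[mu]_(x in B) (f x)%:E.
Proof.
move=> f0 AB; rewrite (integral_mkcond A) (integral_mkcond B).
apply: nn_le_int => x _; rewrite /patch.
- by case: ifP => //; rewrite lee_fin.
case: ifPn => [/set_mem Ax|nAx]; case: ifPn => [/set_mem Bx|/negP nBx] //.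
- by exfalso; apply: nBx; apply/mem_set; exact: AB.
- by rewrite lee_fin.
Qed.

Lemma int_subadd (B1 B2 : set T) (f : T -> R) : (forall x, (0 <= f x)%R) ->
  measurable B1 -> measurable B2 -> measurable_fun setT f ->
  \int[mu]_(x in B1 `|` B2) (f x)%:E <=
  \int[mu]_(x in B1) (f x)%:E + \int[mu]_(x in B2) (f x)%:E.
Proof.
move=> f0 m1 m2 mf.
have -> : B1 `|` B2 = B1 `|` (B2 `\` B1).
  apply/seteqP; split => x /=.
    move=> H; have [?|?] := pselect (B1 x); [by left|right].
    by case: H.
  by case=> [?|[]]; [left|right].
rewrite ge0_integral_setU //; first last.
- by rewrite /disj_set; apply/eqP/seteqP; split => x //= [? []].
- by move=> x _; rewrite lee_fin.
- apply: measurable_funS (measurableT) _ _ => //; exact/measurable_realfun.measurable_EFinP.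
- exact: measurableD.
by rewrite leeD2l // int_monoD // => x [].
Qed.
End IntLemmas.
Section PostL.
Context (dt : measure_display) (T : measurableType dt) (R : realType).
Variable Pr : probability T R.
Local Open Scope ereal_scope.

Lemma post_k_ge0 (L : T -> R) : (forall t, (0 <= L t)%R) ->
  0 <= (((fine (\int[Pr]_(t in setT) (L t)%:E))^-1)%:E : \bar R).
Proof.
move=> L0; rewrite lee_fin invr_ge0 fine_ge0 // integral_ge0 // => t _.
by rewrite lee_fin.
Qed.

Lemma post_mono (L : T -> R) A B : (forall t, (0 <= L t)%R) -> A `<=` B ->
  post Pr L A <= post Pr L B.
Proof.
move=> L0 AB; rewrite /post; apply: lee_wpmul2r; first exact: post_k_ge0.
exact: int_monoD.
Qed.

Lemma post_sub (L : T -> R) A B1 B2 : (forall t, (0 <= L t)%R) ->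
  measurable B1 -> measurable B2 -> measurable_fun setT L ->
  A `<=` B1 `|` B2 -> post Pr L A <= post Pr L B1 + post Pr L B2.
Proof.
move=> L0 m1 m2 mL AB.
apply: le_trans (@post_mono L A (B1 `|` B2) L0 AB) _.
rewrite /post -ge0_muleDl; first last.
- by apply: integral_ge0 => t _; rewrite lee_fin.
- by apply: integral_ge0 => t _; rewrite lee_fin.
apply: lee_wpmul2r; first exact: post_k_ge0.
exact: int_subadd.
Qed.
End PostL.

Lemma prob_inter (dt : measure_display) (T : measurableType dt) (R : realType)
  (P : probability T R) (E1 E2 : set T) (a b : R) :
  measurable E1 -> measurable E2 ->
  ((1 - a)%:E <= P E1)%E -> ((1 - b)%:E <= P E2)%E -> ((1 - a - b)%:E <= P (E1 `&` E2))%E.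
Proof.
move=> m1 m2 h1 h2.
have f1 : P E1 \is a fin_num := fin_num_measure P _ m1.
have f2 : P E2 \is a fin_num := fin_num_measure P _ m2.
have f3 : P (E1 `&` E2) \is a fin_num := fin_num_measure P _ (measurableI _ _ m1 m2).
have f4 : P (E1 `|` E2) \is a fin_num := fin_num_measure P _ (measurableU _ _ m1 m2).
have hU := @measureUfinr _ _ _ P E1 E2 m1 m2 (le_lt_trans (probability_le1 P m2) (ltry 1)).
have hle := probability_le1 P (measurableU _ _ m1 m2).
have hU' : fine (P (E1 `|` E2)) = fine (P E1) + fine (P E2) - fine (P (E1 `&` E2)).
  by rewrite hU fineB ?fin_numD ?f1 ?f2 // fineD.
rewrite -(fineK f1) lee_fin in h1.
rewrite -(fineK f2) lee_fin in h2.
rewrite -(fineK f4) lee_fin in hle.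
rewrite -(fineK f3) lee_fin.
lra.
Qed.

Section Arith.
Variable R : realType.

Lemma N_pow (c : R) : 0 < c -> exists N : nat, forall n : nat, (N <= n)%N ->
  2 <= (n%:R : R) `^ (c / 2).
Proof.
move=> c0.
set y : R := 2 `^ (2 / c).
exists (Num.Def.trunc y).+1 => n hn.
have hy : y < n%:R.
  apply: lt_le_trans (truncnS_gt y) _; by rewrite ler_nat.
have y0 : 0 <= y by apply: powR_ge0.
have : y `^ (c / 2) <= (n%:R : R) `^ (c / 2).
  apply: ge0_ler_powR.
  - by rewrite divr_ge0 // ltW.
  - by rewrite nnegrE.
  - by rewrite nnegrE; exact: le_trans (ltW hy).
  - exact: ltW.
rewrite /y -powRrM.
have -> : 2 / c * (c / 2) = 1 :> R by field; rewrite gt_eqF.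
by rewrite powRr1.
Qed.

Lemma exp_bound (x c1 c2 C1 C2 : R) : 1 <= x -> 0 < c1 -> 0 < c2 -> 0 <= C1 -> 0 <= C2 ->
  2 <= x `^ (Num.min c1 c2 / 2) ->
  x `^ (- c1) + x `^ (- c2) <= x `^ (- (Num.min c1 c2 / 2)) /\
  C1 * x `^ (- c1) + C2 * x `^ (- c2) <= (C1 + C2) * x `^ (- (Num.min c1 c2 / 2)).
Proof.
move=> x1 c10 c20 C10 C20 h2.
set c := Num.min c1 c2.
have c0 : 0 < c by rewrite /c lt_min c10 c20.
set p := x `^ (- (c / 2)).
have p0 : 0 <= p by apply: powR_ge0.
have pq : x `^ (- c) = p * p.
  rewrite /p -powRD; first by congr (_ `^ _); field.
  apply/implyP => _; rewrite gt_eqF //; exact: lt_le_trans ltr01 x1.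
have ph : p <= 1 / 2.
  rewrite /p powRN.
  rewrite ler_pdivlMr //.
  have q0 : 0 < x `^ (c / 2) by apply: lt_le_trans h2; lra.
  rewrite mulrC ler_pdivrMr // mul1r.
  by move: h2; rewrite /c.
have b1 : x `^ (- c1) <= p * p.
  rewrite -pq; apply: ler_powR => //; rewrite lerN2 /c ge_min lexx //.
have b2 : x `^ (- c2) <= p * p.
  rewrite -pq; apply: ler_powR => //; rewrite lerN2 /c ge_min lexx orbT //.
have pp : p * p <= p / 2 by nra.
have e1 := powR_ge0 x (- c1); have e2 := powR_ge0 x (- c2).
split; first lra.
nra.
Qed.

End Arith.

Set Implicit Arguments.
Section Real.
Variable R : realType.
Implicit Types v w x y : R.

Lemma opE_pos v : 0 < 1 + expR v.
Proof. by rewrite addr_gt0 // expR_gt0. Qed.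

Lemma logistic_gt0 v : 0 < logistic v.
Proof. by rewrite /logistic divr_gt0 // ?expR_gt0 ?opE_pos. Qed.

Lemma one_logistic v : 1 - logistic v = (1 + expR v)^-1.
Proof.
have h := opE_pos v; rewrite /logistic.
by field; rewrite gt_eqF.
Qed.

Lemma logistic_lt1 v : logistic v < 1.
Proof.
by rewrite -subr_gt0 one_logistic invr_gt0 opE_pos.
Qed.

Definition lrho v := v - 2 * ln (1 + expR v).

Lemma rhoE v : logistic v * (1 - logistic v) = expR (lrho v).
Proof.
have h := opE_pos v.
rewrite one_logistic /logistic /lrho expRD expRN -[2]/(2%:R) expRM_natl lnK ?posrE //.
by field; rewrite gt_eqF.
Qed.

Lemma odds_logistic w : odds (logistic w) = expR w.
Proof.
have h := opE_pos w.
rewrite /odds one_logistic /logistic.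
by field; rewrite gt_eqF.
Qed.

Lemma odds_gt0 {e : R} : 0 < e < 1 -> 0 < odds e.
Proof. by case/andP => e0 e1; rewrite /odds divr_gt0 // subr_gt0. Qed.

Lemma ln_odds (e : R) : 0 < e < 1 -> ln (odds e) = ln e - ln (1 - e).
Proof.
case/andP => e0 e1.
by rewrite /odds lnM ?posrE ?invr_gt0 ?subr_gt0 // lnV ?posrE ?subr_gt0.
Qed.

Definition sig x := 1 / (1 + expR x).

Lemma hfunE d th (b : 'I_d -> R) (e : R) z : 0 < e < 1 ->
  hfun th b e z = sig (lrho (lin z b) - lrho (th + lin z b) - ln (odds e)).
Proof.
move=> he; have ho := odds_gt0 he.
rewrite /hfun /sig !rhoE; congr (_ / (1 + _)).
rewrite (expRD (lrho _ - _)) expRD !expRN lnK ?posrE //.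
case/andP: he => e0 e1.
have p1 := expR_gt0 (lrho (lin z b)); have p2 := expR_gt0 (lrho (th + lin z b)).
move: p1 p2; set A := expR _; set B := expR _ => p1 p2.
rewrite /odds; field.
by rewrite !gt_eqF ?subr_gt0.
Qed.

Lemma ln_ratio w (e : R) : 0 < e < 1 -> ln (odds (logistic w) / odds e) = w - ln (odds e).
Proof.
move=> he; have ho := odds_gt0 he.
by rewrite odds_logistic lnM ?posrE ?invr_gt0 ?expR_gt0 // lnV ?posrE // expRK.
Qed.

Lemma sig_lip1 x y : x <= y -> 0 <= sig x - sig y <= y - x.
Proof.
move=> xy.
have a0 := expR_gt0 x; have b0 := expR_gt0 y.
have key : expR y * (1 - (y - x)) <= expR x.
  have := expR_ge1Dx (x - y); rewrite expRD expRN => h.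
  have : expR y * (1 + (x - y)) <= expR y * (expR x * (expR y)^-1).
    by rewrite ler_pM2l.
  rewrite mulrCA mulfV ?gt_eqF // mulr1.
  by congr (_ <= _); congr (_ * _); ring.
have ex : expR x <= expR y by rewrite ler_expR.
have eq1 : sig x - sig y = (expR y - expR x) / ((1 + expR x) * (1 + expR y)).
  rewrite /sig; field; rewrite !gt_eqF ?opE_pos //.
rewrite eq1; apply/andP; split.
  by rewrite divr_ge0 ?subr_ge0 // mulr_ge0 // ltW // opE_pos.
rewrite ler_pdivrMr ?mulr_gt0 ?opE_pos //.
nra.
Qed.

Lemma sig_lip x y : `|sig x - sig y| <= `|x - y|.
Proof.
have [xy|yx] := leP x y.
  have /andP[h1 h2] := @sig_lip1 x y xy.
  by rewrite ger0_norm // distrC ger0_norm ?subr_ge0.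
have /andP[h1 h2] := @sig_lip1 y x (ltW yx).
by rewrite distrC ger0_norm // ger0_norm ?subr_ge0 // ltW.
Qed.

Lemma sig_ge0 x : 0 <= sig x.
Proof. by rewrite /sig divr_ge0 // ltW // opE_pos. Qed.

Lemma sig_le1 x : sig x <= 1.
Proof.
rewrite /sig ler_pdivrMr ?opE_pos // mul1r lerDl ltW // expR_gt0. by [].
Qed.

Lemma lnE_lip1 v w : w <= v -> 0 <= ln (1 + expR v) - ln (1 + expR w) <= v - w.
Proof.
move=> wv; have hv := opE_pos v; have hw := opE_pos w.
apply/andP; split.
  by rewrite subr_ge0 ler_ln ?posrE // lerD2l ler_expR.
rewrite lerBlDr.
have -> : v - w + ln (1 + expR w) = ln (expR (v - w) * (1 + expR w)).
  by rewrite lnM ?posrE ?expR_gt0 // expRK.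
rewrite ler_ln ?posrE ?mulr_gt0 ?expR_gt0 //.
rewrite mulrDr mulr1 -expRD subrK lerD2r.
by rewrite -expR0 ler_expR subr_ge0.
Qed.

Lemma lrho_lip v w : `|lrho v - lrho w| <= `|v - w|.
Proof.
rewrite /lrho.
have [wv|vw] := leP w v.
  have /andP[h1 h2] := @lnE_lip1 v w wv.
  rewrite (ger0_norm (x := v - w)) ?subr_ge0 //.
  rewrite ler_norml; apply/andP; split; lra.
have /andP[h1 h2] := @lnE_lip1 w v (ltW vw).
rewrite (ler0_norm (x := v - w)); last by rewrite subr_le0 ltW.
rewrite ler_norml; apply/andP; split; lra.
Qed.


Lemma logistic01 w : 0 < logistic w < 1.
Proof. by rewrite logistic_gt0 logistic_lt1. Qed.

Lemma h_lip d th th0 (b b0 : 'I_d -> R) w (e0 : R) z : 0 < e0 < 1 ->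
  `|hfun th b (logistic w) z - hfun th0 b0 e0 z| <=
  `|lin z b - lin z b0| + `|(th + lin z b) - (th0 + lin z b0)| + `|w - ln (odds e0)|.
Proof.
move=> he.
rewrite !hfunE // ?logistic01 // odds_logistic expRK.
apply: le_trans (sig_lip _ _) _.
set A := lrho (lin z b); set A0 := lrho (lin z b0).
set B := lrho (th + lin z b); set B0 := lrho (th0 + lin z b0).
have -> : A - B - w - (A0 - B0 - ln (odds e0)) = (A - A0) - (B - B0) - (w - ln (odds e0)).
  by ring.
apply: le_trans (ler_normB _ _) _; rewrite lerD2r.
apply: le_trans (ler_normB _ _) _.
by apply: lerD; apply: lrho_lip.
Qed.

Lemma h_le1 d th (b : 'I_d -> R) w z : `|hfun th b (logistic w) z| <= 1.
Proof.
by rewrite hfunE ?logistic01 // ger0_norm ?sig_ge0 // sig_le1.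
Qed.

Lemma lin_lip d (z b b0 : 'I_d -> R) CZ : (forall j, `|z j| <= CZ) ->
  `|lin z b - lin z b0| <= CZ * \sum_(j < d) `|b j - b0 j|.
Proof.
move=> hz; rewrite /lin -sumrB mulr_sumr.
apply: le_trans (ler_norm_sum _ _ _) _.
apply: ler_sum => j _; rewrite -mulrBr normrM; exact: ler_wpM2r.
Qed.

Lemma phi_bound d th th0 (b b0 : 'I_d -> R) w (e0 : R) z :
  `|phifun th b (logistic w) z - phifun th0 b0 e0 z| <=
  `|th - th0| + `|th0| * `|hfun th b (logistic w) z - hfun th0 b0 e0 z|
  + `|lin z b - lin z b0|.
Proof.
rewrite /phifun.
set h := hfun th b (logistic w) z; set h0 := hfun th0 b0 e0 z.
have h1 : `|h| <= 1 by apply: h_le1.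
clearbody h h0.
have -> : th * h + lin z b - (th0 * h0 + lin z b0) =
  (th - th0) * h + th0 * (h - h0) + (lin z b - lin z b0) by ring.
apply: le_trans (ler_normD _ _) _; rewrite lerD2r.
apply: le_trans (ler_normD _ _) _; rewrite !normrM lerD2r.
rewrite -[leRHS]mulr1; exact: ler_wpM2l.
Qed.

End Real.
Lemma det (R : realType) (CZ M1 M2 M0 s r D dA dU dW hd pd t0 : R) :
  0 < CZ -> 0 < M1 -> 0 < M2 -> 0 < M0 -> 1 <= s -> 0 <= r -> D < M1 * s * r ->
  dA <= D -> dU <= CZ * D -> dW < M2 * r -> 0 <= hd -> 0 <= t0 -> t0 <= M0 ->
  hd <= dU + (dA + dU) + dW -> pd <= dA + t0 * hd + dU ->
  hd < ((1 + M0) * ((2 * CZ + 1) * M1 + M2) + (1 + CZ) * M1) * s * r /\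
  pd < ((1 + M0) * ((2 * CZ + 1) * M1 + M2) + (1 + CZ) * M1) * s * r.
Proof.
move=> CZ0 M10 M20 M00 s1 r0 hD hA hU hW hd0 t00 t0M hh hp.
set K := (2 * CZ + 1) * M1 + M2.
have sr0 : 0 <= s * r by nra.
have k1 : (2 * CZ + 1) * D <= (2 * CZ + 1) * (M1 * s * r).
  have h0 : 0 <= 2 * CZ + 1 by lra.
  apply: ler_wpM2l; [exact: h0 | exact: ltW].
have k2 : M2 * r <= M2 * (s * r).
  have hr : r <= s * r by nra.
  by apply: ler_wpM2l; [exact: ltW | exact: hr].
have hK : hd < K * (s * r).
  rewrite /K mulrDl; have : hd < (2 * CZ + 1) * (M1 * s * r) + M2 * r by lra.
  move=> h; apply: lt_le_trans h _.
  by rewrite -(mulrA (2 * CZ + 1) M1) (mulrA M1 s r) lerD2l.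
have K0 : 0 <= K by rewrite /K; nra.
have hK2 : t0 * hd <= M0 * hd by nra.
have hK3 : M0 * hd < M0 * (K * (s * r)) by rewrite ltr_pM2l.
have hD2 : D <= M1 * (s * r) by rewrite mulrA ltW.
have hD3 : CZ * D <= CZ * (M1 * (s * r)) by nra.
have e1 : ((1 + M0) * K + (1 + CZ) * M1) * s * r =
  K * (s * r) + M0 * (K * (s * r)) + (1 + CZ) * (M1 * (s * r)) by ring.
have msr : 0 <= M1 * (s * r) by rewrite mulr_ge0 // ltW.
have h5 : 0 <= K * (s * r) by rewrite mulr_ge0.
have h3 : 0 <= (1 + CZ) * (M1 * (s * r)).
  have h1c : 0 <= 1 + CZ by lra.
  exact: mulr_ge0.
have h4 : 0 <= M0 * (K * (s * r)) by rewrite mulr_ge0 // ltW.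
rewrite e1; split; first lra.
have : (1 + CZ) * (M1 * (s * r)) = M1 * (s * r) + CZ * (M1 * (s * r)) by ring.
lra.
Qed.

Lemma core (R : realType) n d (CZ M1 M2 M0 s r th th0 : R) (b b0 g : 'I_d -> R)
  (z : 'I_n -> 'I_d -> R) (e0 : 'I_n -> R) :
  0 < CZ -> 0 < M1 -> 0 < M2 -> 0 < M0 -> 1 <= s -> 0 <= r ->
  (forall i j, `|z i j| <= CZ) -> (forall i, 0 < e0 i < 1) -> `|th0| <= M0 ->
  dev1 th th0 b b0 < M1 * s * r ->
  (forall i, `|lin (z i) g - ln (odds (e0 i))| < M2 * r) ->
  forall i,
  `|hfun th b (logistic (lin (z i) g)) (z i) - hfun th0 b0 (e0 i) (z i)|
    < ((1 + M0) * ((2 * CZ + 1) * M1 + M2) + (1 + CZ) * M1) * s * r /\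
  `|phifun th b (logistic (lin (z i) g)) (z i) - phifun th0 b0 (e0 i) (z i)|
    < ((1 + M0) * ((2 * CZ + 1) * M1 + M2) + (1 + CZ) * M1) * s * r.
Proof.
move=> CZ0 M10 M20 M00 s1 r0 hz he ht hD hW i.
have sum0 : 0 <= \sum_(j < d) `|b j - b0 j| by apply: sumr_ge0.
have hA : `|th - th0| <= dev1 th th0 b b0 by rewrite /dev1 lerDl.
have hS : \sum_(j < d) `|b j - b0 j| <= dev1 th th0 b b0 by rewrite /dev1 lerDr.
have hU : `|lin (z i) b - lin (z i) b0| <= CZ * dev1 th th0 b b0.
  apply: le_trans (lin_lip _ _ _ _ _ (hz i)) _.
  by apply: ler_wpM2l => //; exact: ltW.
apply: (@det R CZ M1 M2 M0 s r (dev1 th th0 b b0) `|th - th0| `|lin (z i) b - lin (z i) b0|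
  `|lin (z i) g - ln (odds (e0 i))| _ _ `|th0|) => //.
- apply: le_trans (h_lip _ _ _ _ _ _ _ _ (he i)) _.
  rewrite lerD2r lerD2l.
  have -> : th + lin (z i) b - (th0 + lin (z i) b0) = (th - th0) + (lin (z i) b - lin (z i) b0).
    by ring.
  exact: ler_normD.
- exact: phi_bound.
Qed.

Unset Implicit Arguments.

Theorem lemma3 (R : realType)
  (dim : nat -> nat)
  (* data: (Y_i, X_i, Z_i), i < n, on a probability space for each n *)
  (dO : measure_display) (Om : nat -> measurableType dO)
  (P : forall n, probability (Om n) R)
  (Y X : forall n, Om n -> 'I_n -> bool)
  (Z : forall n, Om n -> 'I_n -> 'I_(dim n) -> R)
  (* true parameters and true propensity score *)
  (theta0 : nat -> R) (beta0 : forall n, 'I_(dim n) -> R)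
  (e0 : forall n, ('I_(dim n) -> R) -> R)
  (* prior on the draws (tilde theta, beta, gamma) *)
  (dT : measure_display) (T : nat -> measurableType dT)
  (Prior : forall n, probability (T n) R)
  (tht : forall n, T n -> R) (bet gam : forall n, T n -> 'I_(dim n) -> R)
  (pith : nat -> R -> R) (M0 : R)
  (* measurability of the data *)
  (mY : forall n i, measurable [set w | Y n w i])
  (mX : forall n i, measurable [set w | X n w i])
  (mZ : forall n i j, measurable_fun setT (fun w => Z n w i j))
  (* true propensity score: P(X_i = 1 | Z_i) = e0(Z_i), in (0,1) *)
  (e0_range : forall n z, 0 < e0 n z < 1)
  (HX : forall n i A, sigma_Zi (Z n) i A ->
     (P n (A `&` [set w | X n w i]) = \int[P n]_(w in A) (e0 n (Z n w i))%:E)%E)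
  (* responses conditionally independent given (X,Z), logistic model *)
  (HY : forall n A (y : 'I_n -> bool), sigma_XZ (X n) (Z n) A ->
     (P n (A `&` [set w | Y n w = y]) =
     \int[P n]_(w in A)
        (\prod_(i < n)
           (if y i then logistic (b2R R (X n w i) * theta0 n + lin (Z n w i) (beta0 n))
            else 1 - logistic (b2R R (X n w i) * theta0 n + lin (Z n w i) (beta0 n))))%:E)%E)
  (* prior: measurable coordinates, independent pi(theta) pi(beta) pi(gamma) *)
  (mth : forall n, measurable_fun setT (tht n))
  (mbe : forall n j, measurable_fun setT (fun t => bet n t j))
  (mga : forall n j, measurable_fun setT (fun t => gam n t j))
  (Hindep : forall n A B C,
     sigma_of (fun _ : unit => tht n) A ->
     sigma_of (fun j t => bet n t j) B ->
     sigma_of (fun j t => gam n t j) C ->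
     Prior n (A `&` B `&` C) = (Prior n A * Prior n B * Prior n C)%E)
  (* the prior of theta has Lebesgue density pith n *)
  (Hpith : forall n, (forall x, 0 <= pith n x) /\
     (forall B, measurable B ->
        (Prior n (tht n @^-1` B) = \int[lebesgue_measure]_(x in B) (pith n x)%:E)%E))
  (* s >= 1 (s = number of nonzero entries of beta0) *)
  (s_pos : forall n, (0 < sparsity (beta0 n))%N)
  (* (A1) *)
  (A1 : (fun n : nat => ln ((dim n)%:R : R) / n%:R) @ \oo --> (0 : R))
  (* (A2) *)
  (A2 : exists CZ : R, 0 < CZ /\ forall n w i j, `|Z n w i j| <= CZ)
  (* (A3) *)
  (A3 : (fun n : nat => ((sparsity (beta0 n))%:R ^+ 2 * ln (dvn R (dim n) n))
                        / Num.sqrt (n%:R : R)) @ \oo --> (0 : R))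
  (* (A4) *)
  (A4 : exists M1 C1 c1 : R, 0 < M1 /\ 0 < C1 /\ 0 < c1 /\
     exists N1, forall n, (N1 <= n)%N ->
     exists E1 : set (Om n), measurable E1 /\
       ((1 - dvn R (dim n) n `^ (- c1))%:E <= P n E1)%E /\
       forall w, E1 w ->
       (Post (Prior n) (tht n) (bet n) (gam n) (Y n w) (X n w) (Z n w)
          [set t | (M1 * rate R (dim n) n <=
             Num.max (dev1 (tht n t) (theta0 n) (bet n t) (beta0 n)
                        / (sparsity (beta0 n))%:R)
                     (dev2 (tht n t) (theta0 n) (bet n t) (beta0 n)
                        / Num.sqrt ((sparsity (beta0 n))%:R)))%R]
        <= (C1 * dvn R (dim n) n `^ (- c1))%:E)%E)
  (* (A5) *)
  (A5 : exists M2 C2 c2 : R, 0 < M2 /\ 0 < C2 /\ 0 < c2 /\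
     exists N2, forall n, (N2 <= n)%N ->
     exists E2 : set (Om n), measurable E2 /\
       ((1 - dvn R (dim n) n `^ (- c2))%:E <= P n E2)%E /\
       forall w, E2 w ->
       (Post (Prior n) (tht n) (bet n) (gam n) (Y n w) (X n w) (Z n w)
          [set t | exists i : 'I_n, (M2 * rate R (dim n) n <=
             `| ln (odds (logistic (lin (Z n w i) (gam n t)))
                    / odds (e0 n (Z n w i))) |)%R]
        <= (C2 * dvn R (dim n) n `^ (- c2))%:E)%E)
  (* (A6) *)
  (A6 : 0 < M0 /\ forall n, `|theta0 n| <= M0 /\
          {for (theta0 n), continuous (pith n)} /\ 0 < pith n (theta0 n)) :
  exists M C c3 c4 : R, 0 < M /\ 0 < C /\ 0 < c3 /\ 0 < c4 /\
  exists N, forall n, (N <= n)%N ->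
    (exists E3 : set (Om n), measurable E3 /\
       ((1 - dvn R (dim n) n `^ (- c3))%:E <= P n E3)%E /\
       forall w, E3 w ->
       (Post (Prior n) (tht n) (bet n) (gam n) (Y n w) (X n w) (Z n w)
          [set t | exists i : 'I_n, (
             M * (sparsity (beta0 n))%:R * rate R (dim n) n <=
             `| hfun (tht n t) (bet n t) (logistic (lin (Z n w i) (gam n t))) (Z n w i)
                - hfun (theta0 n) (beta0 n) (e0 n (Z n w i)) (Z n w i) |)%R]
        <= (C * dvn R (dim n) n `^ (- c3))%:E)%E) /\
    (exists E4 : set (Om n), measurable E4 /\
       ((1 - dvn R (dim n) n `^ (- c4))%:E <= P n E4)%E /\
       forall w, E4 w ->
       (Post (Prior n) (tht n) (bet n) (gam n) (Y n w) (X n w) (Z n w)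
          [set t | exists i : 'I_n, (
             M * (sparsity (beta0 n))%:R * rate R (dim n) n <=
             `| phifun (tht n t) (bet n t) (logistic (lin (Z n w i) (gam n t))) (Z n w i)
                - phifun (theta0 n) (beta0 n) (e0 n (Z n w i)) (Z n w i) |)%R]
        <= (C * dvn R (dim n) n `^ (- c4))%:E)%E).
Proof.
case: A2 => CZ [CZ0 hZ].
case: A4 => M1 [C1 [c1 [M10 [C10 [c10 [N1 H1]]]]]].
case: A5 => M2 [C2 [c2 [M20 [C20 [c20 [N2 H2]]]]]].
case: A6 => M00 hth.
set c := Num.min c1 c2.
have c0 : 0 < c by rewrite lt_min c10 c20.
have [N3 HN3] := @N_pow R c c0.
set K := (2 * CZ + 1) * M1 + M2.
set M := (1 + M0) * K + (1 + CZ) * M1.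
have K0 : 0 < K.
  rewrite /K addr_gt0 // mulr_gt0 //; lra.
have M0p : 0 < M.
  rewrite /M addr_gt0 // mulr_gt0 //; lra.
have c20' : 0 < c / 2 by rewrite divr_gt0.
exists M, (C1 + C2), (c / 2), (c / 2).
split; first exact: M0p.
split; first by rewrite addr_gt0.
split; first exact: c20'.
split; first exact: c20'.
exists (maxn N1 (maxn N2 N3)) => n hn.
have hn1 : (N1 <= n)%N by apply: leq_trans hn; rewrite leq_maxl.
have hn2 : (N2 <= n)%N by apply: leq_trans hn; rewrite leq_max leq_maxl orbT.
have hn3 : (N3 <= n)%N by apply: leq_trans hn; rewrite leq_max leq_maxr !orbT.
have [E1 [mE1 [PE1 HE1]]] := H1 n hn1.
have [E2 [mE2 [PE2 HE2]]] := H2 n hn2.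
have dim1 : (0 < dim n)%N.
  apply: leq_trans (s_pos n) _; rewrite /sparsity.
  by apply: leq_trans (max_card _) _; rewrite card_ord.
set x := dvn R (dim n) n.
have x1 : 1 <= x by rewrite /x /dvn ler1n; apply: leq_trans dim1 (leq_maxl _ _).
have h2x : 2 <= x `^ (c / 2).
  by apply: HN3; apply: leq_trans hn3 (leq_maxr _ _).
have [eb1 eb2] := @exp_bound R x c1 c2 C1 C2 x1 c10 c20 (ltW C10) (ltW C20) h2x.
set s := (sparsity (beta0 n))%:R : R.
set r := rate R (dim n) n.
have s1 : 1 <= s by rewrite /s ler1n.
have r0 : 0 <= r by rewrite /r /rate sqrtr_ge0.
have PE : ((1 - x `^ (- (c / 2)))%:E <= P n (E1 `&` E2))%E.
  apply: le_trans (@prob_inter _ _ _ (P n) E1 E2 _ _ mE1 mE2 PE1 PE2).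
  rewrite lee_fin; lra.
set B1 := [set t | M1 * s * r <= dev1 (tht n t) (theta0 n) (bet n t) (beta0 n)].
have mB1 : measurable B1.
  apply: meas_ge; rewrite /dev1.
  apply: measurable_realfun.measurable_funD.
    apply: measurableT_comp => //.
    by apply: measurable_realfun.measurable_funB => //; exact: measurable_cst.
  apply: (@measurable_sum _ _ _ setT _ _ (fun j t => `|bet n t j - beta0 n j|)) => j.
  apply: measurableT_comp => //.
  by apply: measurable_realfun.measurable_funB => //; exact: measurable_cst.
set B2 := fun w => \bigcup_(i in [set: 'I_n])
  [set t | M2 * r <= `|lin (Z n w i) (gam n t) - ln (odds (e0 n (Z n w i)))|].
have mB2 : forall w, measurable (B2 w).
  move=> w; apply: fin_bigcup_measurable; first exact: finite_finset.
  move=> i _; apply: meas_ge.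
  apply: measurableT_comp => //.
  apply: measurable_realfun.measurable_funB; last exact: measurable_cst.
  exact: meas_lin.
have key : forall w, E1 w -> E2 w -> forall F, F `<=` B1 `|` B2 w ->
  (Post (Prior n) (tht n) (bet n) (gam n) (Y n w) (X n w) (Z n w) F
    <= ((C1 + C2) * x `^ (- (c / 2)))%:E)%E.
  move=> w w1 w2 F FB.
  set L := fun t => lik (Y n w) (X n w) (Z n w) (tht n t) (bet n t) (gam n t).
  have L0 : forall t, 0 <= L t by move=> t; exact: lik_ge0.
  have mL : measurable_fun setT L by apply: meas_lik.
  rewrite /Post -/L.
  apply: le_trans (@post_sub _ _ _ (Prior n) L F B1 (B2 w) L0 mB1 (mB2 w) mL FB) _.
  apply: le_trans (_ : (_ <= (C1 * x `^ (- c1))%:E + (C2 * x `^ (- c2))%:E)%E) _; last first.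
    by rewrite -EFinD lee_fin.
  apply: leeD.
    apply: le_trans (HE1 w w1).
    apply: post_mono => // t /= Bt.
    have s0 : 0 < s by lra.
    rewrite le_max; apply/orP; left.
    by rewrite ler_pdivlMr // mulrAC.
  apply: le_trans (HE2 w w2).
  apply: post_mono => // t /= [i _ Bt]; exists i.
  by rewrite ln_ratio.
split.
  exists (E1 `&` E2); split; first exact: measurableI.
  split; first exact: PE.
  move=> w [w1 w2]; apply: key => // t [i hi].
  have [b1|nb1] := pselect (B1 t); first by left.
  have [b2|nb2] := pselect (B2 w t); first by right.
  exfalso.
  have hD : dev1 (tht n t) (theta0 n) (bet n t) (beta0 n) < M1 * s * r.
    by rewrite ltNge; apply/negP.
  have hW : forall k, `|lin (Z n w k) (gam n t) - ln (odds (e0 n (Z n w k)))| < M2 * r.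
    by move=> k; rewrite ltNge; apply/negP => hk; apply: nb2; exists k.
  have [hh _] := @core R n (dim n) CZ M1 M2 M0 s r (tht n t) (theta0 n) (bet n t) (beta0 n) (gam n t) (Z n w) (fun k => e0 n (Z n w k)) CZ0 M10 M20 M00 s1 r0 (hZ n w) (fun k => e0_range n (Z n w k))
    (hth n).1 hD hW i.
  by move: hi; rewrite leNgt hh.
exists (E1 `&` E2); split; first exact: measurableI.
split; first exact: PE.
move=> w [w1 w2]; apply: key => // t [i hi].
have [b1|nb1] := pselect (B1 t); first by left.
have [b2|nb2] := pselect (B2 w t); first by right.
exfalso.
have hD : dev1 (tht n t) (theta0 n) (bet n t) (beta0 n) < M1 * s * r.
  by rewrite ltNge; apply/negP.
have hW : forall k, `|lin (Z n w k) (gam n t) - ln (odds (e0 n (Z n w k)))| < M2 * r.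
  by move=> k; rewrite ltNge; apply/negP => hk; apply: nb2; exists k.
have [_ hh] := @core R n (dim n) CZ M1 M2 M0 s r (tht n t) (theta0 n) (bet n t) (beta0 n) (gam n t) (Z n w) (fun k => e0 n (Z n w k)) CZ0 M10 M20 M00 s1 r0 (hZ n w) (fun k => e0_range n (Z n w k))
  (hth n).1 hD hW i.
by move: hi; rewrite leNgt hh.
Qed.
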